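(* Assume $\|\mathbf{x}_t\|_\infty\le1$ for all $t$. For any $\tau\ge1$, let $\mathbf{z}_\tau=\mathbf{h}_{\tau^2}\hat{\mathbf{w}}_{\tau-1}-\mathbf{x}_{\tau^2}\mathbf{x}_{\tau^2}^\top\hat{\mathbf{w}}_{\tau-1}$. Then for all $i\in[d]$, $$|z_{\tau,i}|\le\frac{(d-1)(d-2)}{(k-1)(k-2)}\|\hat{\mathbf{w}}_{\tau-1}\|_1,\qquad\mathbb{E}_\tau[z_{\tau,i}^2]\le\frac{2(d-1)}{k-1}\|\hat{\mathbf{w}}_{\tau-1}\|_1^2.$$
   Context: Integers $3\le k\le d-3$, $[d]=\{1,\dots,d\}$. SAMPLING$(k,d,\mathbf{w})$ for nonzero $\mathbf{w}\in\mathbb{R}^d$: with $q_i=|w_i|/\|\mathbf{w}\|_1$, draw $I_1\in[d]$ with $\mathbb{P}(I_1=i)=q_i$, then $k-1$ distinct indices uniformly without replacement from $[d]\setminus\{I_1\}$; output the $k$-set $B$. At round $\tau$, $B_\tau=$SAMPLING$(k,d,\hat{\mathbf{w}}_{\tau-1})$ for a nonzero vector $\hat{\mathbf{w}}_{\tau-1}$ determined by $B_1,\dots,B_{\tau-1}$ ($\hat{\mathbf{w}}_0=\frac1d\mathbf{1}_d$). $\mathbb{P}$ and $\mathbb{E}_\tau[\cdot]=\mathbb{E}[\cdot\mid B_1,\dots,B_{\tau-1}]$ are over $B_\tau$. The instance $\mathbf{x}_{\tau^2}\in\mathbb{R}^d$ is fixed given the past; $h_{\tau^2}[i,i]=\frac{x_{\tau^2,i}^2}{\mathbb{P}[i\in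 B_\tau]}\mathbb{I}_{i\in B_\tau}$ and $h_{\tau^2}[i,j]=\frac{x_{\tau^2,i}x_{\tau^2,j}}{\mathbb{P}[i,j\in B_\tau]}\mathbb{I}_{i,j\in B_\tau}$ for $i\ne j$. *)

(* Defs.v *)
From mathcomp Require Import all_boot all_order all_algebra.
Set Implicit Arguments. Unset Strict Implicit. Unset Printing Implicit Defensive.
Import Order.TTheory GRing.Theory Num.Theory.
Local Open Scope ring_scope.

Section Sampling.
Variables (R : realFieldType) (d k : nat).

Definition norm1 (w : 'I_d -> R) : R := \sum_(i < d) `|w i|.

Definition qprob (w : 'I_d -> R) (i : 'I_d) : R := `|w i| / norm1 w.

(* the (k-1)-subsets of [d] \ {i}: possible outcomes of drawing k-1 distinct
   indices uniformly without replacement from [d] \ {i} (as a set) *)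
Definition rest_sets (i : 'I_d) : {set {set 'I_d}} :=
  [set A : {set 'I_d} | (A \subset [set~ i]) && (#|A| == k.-1)%N].

(* probability that SAMPLING(k,d,w) outputs the set B:
   P(B) = sum_i q_i * sum_{A in rest_sets i} (1/#|rest_sets i|) [i |: A = B] *)
Definition samp_prob (w : 'I_d -> R) (B : {set 'I_d}) : R :=
  \sum_(i < d) qprob w i *
    \sum_(A in rest_sets i) (if i |: A == B then (#|rest_sets i|%:R)^-1 else 0).

Definition Expect (w : 'I_d -> R) (f : {set 'I_d} -> R) : R :=
  \sum_(B : {set 'I_d}) samp_prob w B * f B.

Definition pin1 (w : 'I_d -> R) (i : 'I_d) : R :=
  \sum_(B : {set 'I_d} | i \in B) samp_prob w B.
Definition pin2 (w : 'I_d -> R) (i j : 'I_d) : R :=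
  \sum_(B : {set 'I_d} | (i \in B) && (j \in B)) samp_prob w B.

Definition hmat (w x : 'I_d -> R) (B : {set 'I_d}) (i j : 'I_d) : R :=
  if i == j then (if i \in B then x i ^+ 2 / pin1 w i else 0)
  else (if (i \in B) && (j \in B) then x i * x j / pin2 w i j else 0).

Definition zvec (w x : 'I_d -> R) (B : {set 'I_d}) (i : 'I_d) : R :=
  \sum_(j < d) hmat w x B i j * w j - x i * \sum_(j < d) x j * w j.

End Sampling.

(* Main.v *)
Require Import Defs.
From mathcomp Require Import all_boot all_order all_algebra.
From mathcomp Require Import zify ring lra.
Set Implicit Arguments. Unset Strict Implicit. Unset Printing Implicit Defensive.
Import Order.TTheory GRing.Theory Num.Theory.
Lemma card_sup (T : finType) (U S : {set T}) n : S \subset U ->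
  #|[set A : {set T} | (A \subset U) && (#|A| == n) && (S \subset A)]| =
  'C(#|U| - #|S|, n - #|S|) * (#|S| <= n).
Proof.
Local Open Scope nat_scope.
move=> SU.
case: (leqP #|S| n) => hn; last first.
  rewrite muln0; apply: eq_card0 => A; rewrite !inE.
  apply/negP => /andP[/andP[_ /eqP hA] /subset_leq_card]; rewrite hA => h.
  by move: hn; rewrite ltnNge h.
rewrite muln1.
have -> : [set A : {set T} | (A \subset U) && (#|A| == n) && (S \subset A)] =
   (fun A' => A' :|: S) @: [set A' : {set T} | A' \subset U :\: S & #|A'| == n - #|S|].
  apply/setP => A; rewrite !inE; apply/idP/imsetP.
  - case/andP => /andP[AU /eqP An] SA; exists (A :\: S).
      rewrite inE; apply/andP; split; first by apply: setSD.
      by rewrite cardsD (setIidPr SA) An.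
    apply/setP => x; rewrite !inE; case xS: (x \in S); rewrite ?andbT ?orbT ?orbF //.
    by move/subsetP: SA => /(_ x xS) ->.
  - case=> A'; rewrite inE => /andP[A'U /eqP A'n] ->.
    have dis : A' :&: S = set0.
      by apply/setP => x; rewrite !inE;
         apply/negP => /andP[xA xS]; move/subsetP: A'U => /(_ x xA); rewrite !inE xS.
    rewrite subUset SU subsetUr andbT cardsU dis cards0 subn0 A'n subnK // eqxx andbT.
    by rewrite andbT; apply: subset_trans A'U (subsetDl _ _).
rewrite card_in_imset; last first.
  move=> A1 A2; rewrite !inE => /andP[h1 _] /andP[h2 _] e.
  have dis (A' : {set T}) : A' \subset U :\: S -> (A' :|: S) :\: S = A'.
    move=> hA; apply/setP => x; rewrite !inE; case xS: (x \in S) => /=; last by rewrite orbF.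
    apply/esym/negbTE/negP => xA; move/subsetP: hA => /(_ x xA); rewrite !inE xS //.
  by rewrite -(dis _ h1) e dis.
by rewrite cards_draws cardsD (setIidPr SU).
Qed.

Local Open Scope ring_scope.

Section S.
Variables (R : realFieldType) (d k : nat) (w : 'I_d -> R).

Definition PS (S : {set 'I_d}) : R := \sum_(B : {set 'I_d} | S \subset B) samp_prob k w B.

Lemma PS_cnt S : PS S = \sum_(i < d) qprob w i *
   (#|[set A in rest_sets k i | S \subset i |: A]|%:R / #|rest_sets k i|%:R).
Proof.
rewrite /PS /samp_prob.
rewrite exchange_big /=; apply: eq_bigr => i _.
rewrite -mulr_sumr; congr (_ * _).
rewrite exchange_big /=.
transitivity (\sum_(A in rest_sets k i | S \subset i |: A) (#|rest_sets k i|%:R)^-1 : R).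
  rewrite [in RHS]big_mkcondr /=. apply: eq_bigr => A _.
  case: (boolP (S \subset i |: A)) => h.
    rewrite (bigD1 (i |: A)) //= eqxx big1 ?addr0 //.
    by move=> B /andP[_ /negbTE]; rewrite eq_sym => ->.
  rewrite big1 // => B SB; case: eqP => // e; by move: h; rewrite e SB.
rewrite sumr_const [in RHS]mulrC mulr_natr; congr (_ *+ _).
by rewrite cardsE.
Qed.

Definition fcnt (m : nat) : nat := 'C(d.-1 - m, k.-1 - m) * (m <= k.-1)%N.

Lemma cnt_eq (S : {set 'I_d}) (i : 'I_d) : #|[set A in rest_sets k i | S \subset i |: A]| = fcnt #|S :\ i|.
Proof.
rewrite /fcnt -[d in 'C(d.-1 - _, _)]card_ord -(cardsC1 i) -card_sup; last first.
  by apply/subsetP => x; rewrite !inE => /andP[].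
by apply: eq_card => A; rewrite !inE subDset.
Qed.

Lemma card_rest (i : 'I_d) : #|rest_sets k i| = fcnt 0.
Proof. have := cnt_eq set0 i; rewrite set0D cards0 => <-; apply: eq_card => A; by rewrite !inE sub0set andbT. Qed.

Lemma PS_f (S : {set 'I_d}) : PS S = \sum_(i < d) qprob w i * ((fcnt #|S :\ i|)%:R / (fcnt 0)%:R).
Proof. by rewrite PS_cnt; apply: eq_bigr => i _; rewrite cnt_eq card_rest. Qed.

Hypothesis hw : exists i, w i != 0.

Lemma norm1_gt0 : 0 < norm1 w.
Proof.
case: hw => i0 hi0; rewrite /norm1 (bigD1 i0) //=.
apply: (@lt_le_trans _ _ `|w i0|); first by rewrite normr_gt0.
by rewrite lerDl sumr_ge0.
Qed.

Lemma q_ge0 i : 0 <= qprob w i.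
Proof. by rewrite /qprob divr_ge0 // ltW // norm1_gt0. Qed.

Lemma q_sum : \sum_(i < d) qprob w i = 1.
Proof.
rewrite /qprob -mulr_suml -/(norm1 w) divff //; exact/lt0r_neq0/norm1_gt0.
Qed.

Lemma q_split (S : {set 'I_d}) :
  \sum_(i < d | i \notin S) qprob w i = 1 - \sum_(i in S) qprob w i.
Proof. by rewrite -q_sum [in RHS](bigID (mem S)) /= addrAC subrr add0r. Qed.

Lemma qS_le1 (S : {set 'I_d}) : \sum_(i in S) qprob w i <= 1.
Proof. by rewrite -subr_ge0 -q_split sumr_ge0 // => i _; exact: q_ge0. Qed.

Lemma PS_split (S : {set 'I_d}) : PS S =
  (\sum_(i in S) qprob w i) * ((fcnt #|S|.-1)%:R / (fcnt 0)%:R) +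
  (1 - \sum_(i in S) qprob w i) * ((fcnt #|S|)%:R / (fcnt 0)%:R).
Proof.
rewrite PS_f (bigID (mem S)) /= -q_split !mulr_suml; congr (_ + _); apply: eq_bigr => i hi.
  by rewrite (cardsD1 i S) hi.
by rewrite (cardsD1 i S) (negbTE hi).
Qed.

Lemma fcnt_rec j : (j <= k.-1)%N -> ((d.-1 - j) * fcnt j.+1 = (k.-1 - j) * fcnt j)%N.
Proof.
move=> hj; rewrite /fcnt.
case: (ltnP j k.-1) => hj2.
  rewrite hj /= !muln1.
  have := mul_bin_diag (d.-1 - j) (k.-1 - j.+1).
  have -> : ((k.-1 - j.+1).+1 = k.-1 - j)%N by rewrite subnS prednK // subn_gt0.
  by rewrite -subnS.
have -> : j = k.-1 by apply/eqP; rewrite eqn_leq hj hj2.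
by rewrite subnn /= !muln0 mul0n.
Qed.

Lemma fcnt_gt0 j : (k.-1 <= d.-1)%N -> (j <= k.-1)%N -> (0 < fcnt j)%N.
Proof.
move=> h1 h2; rewrite /fcnt h2 muln1 bin_gt0; exact: leq_sub2r.
Qed.

Local Notation F j := ((fcnt j)%:R : R).
Local Notation q := (qprob w).

Lemma PS0 : F 0 != 0 -> PS set0 = 1.
Proof. by move=> h; rewrite PS_split cards0 big_set0 mul0r add0r subr0 mul1r divff. Qed.

Lemma PS1 i : F 0 != 0 -> PS [set i] = q i + (1 - q i) * (F 1 / F 0).
Proof. by move=> h; rewrite PS_split cards1 big_set1 /= divff // mulr1. Qed.

Lemma PS2 i j : i != j -> PS [set i; j] = (q i + q j) * (F 1 / F 0) + (1 - (q i + q j)) * (F 2 / F 0).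
Proof.
move=> h; rewrite PS_split cards2 h big_setU1 ?big_set1 //=.
by rewrite inE.
Qed.

Lemma PS3 i j l : i != j -> i != l -> j != l -> PS [set i; j; l] =
   (q i + q j + q l) * (F 2 / F 0) + (1 - (q i + q j + q l)) * (F 3 / F 0).
Proof.
move=> hij hil hjl.
have e : [set i; j; l] = i |: (j |: [set l]) by rewrite setUA.
have hi : i \notin j |: [set l] by rewrite !inE negb_or hij hil.
have hj : j \notin [set l] by rewrite !inE hjl.
rewrite e PS_split !cardsU1 cards1 (negbTE hi) (negbTE hj) /=.
rewrite (big_setU1 _ hi) /= (big_setU1 _ hj) /= big_set1 !addrA /=. done.
Qed.

Lemma pin1E i : pin1 k w i = PS [set i].
Proof. by apply: eq_bigl => B; rewrite sub1set. Qed.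

Lemma pin2E i j : pin2 k w i j = PS [set i; j].
Proof. by apply: eq_bigl => B; rewrite subUset !sub1set. Qed.

Hypotheses (hk3 : (3 <= k)%N) (hkd : (k <= d - 3)%N).

Lemma F_rec0 : (d - 1)%:R * F 1 = (k - 1)%:R * F 0 :> R.
Proof.
have := @fcnt_rec 0; rewrite !subn0 => h.
by rewrite -!natrM !subn1 h //; lia.
Qed.

Lemma F_rec1 : (d - 2)%:R * F 2 = (k - 2)%:R * F 1 :> R.
Proof.
have := @fcnt_rec 1 => h.
have e1 : (d.-1 - 1 = d - 2)%N by lia.
have e2 : (k.-1 - 1 = k - 2)%N by lia.
by rewrite -!natrM -e1 -e2 h //; lia.
Qed.

Lemma F_rec2 : (d - 3)%:R * F 3 = (k - 3)%:R * F 2 :> R.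
Proof.
have := @fcnt_rec 2 => h.
have e1 : (d.-1 - 2 = d - 3)%N by lia.
have e2 : (k.-1 - 2 = k - 3)%N by lia.
by rewrite -!natrM -e1 -e2 h //; lia.
Qed.

Lemma F_pos : [/\ 0 < F 0, 0 < F 1, 0 < F 2 & 0 <= F 3].
Proof.
have h1 : (k.-1 <= d.-1)%N by lia.
by rewrite !ltr0n !fcnt_gt0 //; lia.
Qed.

Lemma uvt : [/\ 0 < F 2 / F 0, F 2 / F 0 <= F 1 / F 0, F 1 / F 0 <= 1 &
   (F 1 / F 0) * (F 3 / F 0) <= (F 2 / F 0) ^+ 2].
Proof.
case: F_pos => h0 h1 h2 h3.
have r0 := F_rec0; have r1 := F_rec1; have r2 := F_rec2.
have e1 : (d - 1)%:R = d%:R - 1 :> R by rewrite natrB //; lia.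
have e2 : (d - 2)%:R = d%:R - 2 :> R by rewrite natrB //; lia.
have e3 : (d - 3)%:R = d%:R - 3 :> R by rewrite natrB //; lia.
have f1 : (k - 1)%:R = k%:R - 1 :> R by rewrite natrB //; lia.
have f2 : (k - 2)%:R = k%:R - 2 :> R by rewrite natrB //; lia.
have f3 : (k - 3)%:R = k%:R - 3 :> R by rewrite natrB //; lia.
have hk : 3 <= k%:R :> R by rewrite (ler_nat R 3 k).
have hdk : k%:R + 3 <= d%:R :> R by rewrite -natrD ler_nat; lia.
rewrite e1 f1 in r0; rewrite e2 f2 in r1; rewrite e3 f3 in r2.
have A : F 2 <= F 1 by nra.
have B : F 1 <= F 0 by nra.
have C : F 1 * F 3 <= F 2 ^+ 2.
  have X : (d%:R - 2) * (d%:R - 3) * (F 1 * F 3) <= (d%:R - 2) * (d%:R - 3) * F 2 ^+ 2.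
    rewrite expr2.
    have -> : (d%:R - 2) * (d%:R - 3) * (F 1 * F 3) = (d%:R - 2) * F 1 * ((k%:R - 3) * F 2) by rewrite -r2; ring.
    have -> : (d%:R - 2) * (d%:R - 3) * (F 2 * F 2) = (d%:R - 3) * F 2 * ((k%:R - 2) * F 1) by rewrite -r1; ring.
    have P : 0 <= F 1 * F 2 by nra.
    nra.
  have Y : 0 < (d%:R - 2) * (d%:R - 3) :> R by nra.
  by rewrite -(ler_pM2l Y).
split.
- by rewrite divr_gt0.
- by rewrite ler_pM2r // invr_gt0.
- by rewrite ler_pdivrMr // mul1r.
- by rewrite mulf_div expr_div_n -expr2 ler_pM2r // invr_gt0 exprn_gt0.
Qed.

Local Notation u := (F 1 / F 0).
Local Notation v := (F 2 / F 0).
Local Notation P := (pin2 k w).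

Lemma q_le1 i : q i <= 1.
Proof. by have := qS_le1 [set i]; rewrite big_set1. Qed.

Lemma q2_le1 i j : i != j -> q i + q j <= 1.
Proof.
move=> h; have := qS_le1 [set i; j].
by rewrite big_setU1 ?big_set1 // inE.
Qed.

Lemma Pii i : P i i = q i + (1 - q i) * u.
Proof.
rewrite pin2E setUid PS1 //; case: F_pos => h0 _ _ _; exact: lt0r_neq0.
Qed.

Lemma Pij i j : i != j -> P i j = (q i + q j) * u + (1 - (q i + q j)) * v.
Proof. by move=> h; rewrite pin2E PS2. Qed.

Lemma P_bounds i j : [/\ v <= P i j, P i j <= 1, q j <= P i j / u & u <= P i i].
Proof.
case: uvt => hv hvu hu1 _.
have hu : 0 < u by apply: lt_le_trans hvu.
have qi0 := q_ge0 i; have qj0 := q_ge0 j; have qi1 := q_le1 i.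
have Hii : u <= P i i by rewrite Pii; nra.
case: (eqVneq i j) => [<-|hij].
  rewrite ler_pdivlMr // Pii; split => //; nra.
have hA := q2_le1 hij.
rewrite ler_pdivlMr // Pij //; split => //; nra.
Qed.

Lemma K0val : (d - 1)%:R / (k - 1)%:R = u^-1.
Proof.
case: F_pos => h0 h1 _ _.
have hk : (0 < (k - 1)%:R :> R) by rewrite ltr0n; lia.
rewrite invf_div; apply/eqP; rewrite eqr_div ?lt0r_neq0 //.
by rewrite F_rec0 mulrC.
Qed.

Lemma Dval : ((d - 1) * (d - 2))%:R / ((k - 1) * (k - 2))%:R = v^-1.
Proof.
case: F_pos => h0 h1 h2 _.
have hk : (0 < ((k - 1) * (k - 2))%:R :> R) by rewrite ltr0n; nia.
rewrite invf_div; apply/eqP; rewrite eqr_div ?lt0r_neq0 //.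
rewrite natrM -mulrA F_rec1 mulrA mulrAC F_rec0 natrM; apply/eqP; ring.
Qed.

Variable x : 'I_d -> R.
Hypothesis hx : forall i, `|x i| <= 1.

Lemma hmatE B i j : hmat k w x B i j = if (i \in B) && (j \in B) then x i * x j / P i j else 0.
Proof.
rewrite /hmat; case: eqP => [<-|//]; rewrite andbb expr2; congr (if _ then _ / _ else _).
by apply: eq_bigl => C; rewrite andbb.
Qed.

Lemma zvecE B i : zvec k w x B i = \sum_(j < d) (hmat k w x B i j - x i * x j) * w j.
Proof.
by rewrite /zvec mulr_sumr -sumrB; apply: eq_bigr => j _; rewrite mulrBl mulrA.
Qed.

Lemma bound1 B i : `|zvec k w x B i| <= v^-1 * norm1 w.
Proof.
case: uvt => hv hvu hu1 _.
rewrite zvecE /norm1 mulr_sumr; apply: le_trans (ler_norm_sum _ _ _) _.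
apply: ler_sum => j _; rewrite normrM ler_wpM2r //.
have hxij : `|x i * x j| <= 1 by rewrite normrM; apply: mulr_ile1.
have hv1 : 1 <= v^-1 by rewrite invf_ge1 //; apply: le_trans hu1.
rewrite hmatE; case: ifP => _; last by rewrite sub0r normrN; apply: le_trans hv1.
case: (P_bounds i j) => hp1 hp2 _ _.
have hp : 0 < P i j by apply: lt_le_trans hp1.
have -> : x i * x j / P i j - x i * x j = x i * x j * ((P i j)^-1 - 1) by ring.
rewrite normrM; apply: le_trans (ler_wpM2r _ hxij) _ => //.
have h1 : 1 <= (P i j)^-1 by rewrite invf_ge1.
rewrite mul1r ger0_norm ?subr_ge0 //.
have : (P i j)^-1 <= v^-1 by rewrite lef_pV2 ?posrE.
lra.
Qed.

Lemma sumP_cond (b : pred {set 'I_d}) (C : R) :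
  \sum_(B : {set 'I_d}) samp_prob k w B * (if b B then C else 0) =
  C * \sum_(B : {set 'I_d} | b B) samp_prob k w B.
Proof.
rewrite [in RHS]big_mkcond mulr_sumr; apply: eq_bigr => B _.
by case: (b B); rewrite ?mulr0 // mulrC.
Qed.

Lemma Esum1 : \sum_(B : {set 'I_d}) samp_prob k w B = 1.
Proof.
rewrite -PS0; last by case: F_pos => h0 _ _ _; exact: lt0r_neq0.
by apply: eq_bigl => B; rewrite sub0set.
Qed.

Lemma EY i : \sum_(B : {set 'I_d}) samp_prob k w B * (\sum_(j < d) hmat k w x B i j * w j)
   = x i * \sum_(j < d) x j * w j.
Proof.
under eq_bigr do rewrite mulr_sumr.
rewrite exchange_big mulr_sumr /=; apply: eq_bigr => j _.
under eq_bigr do rewrite hmatE mulrA.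
rewrite -mulr_suml.
rewrite sumP_cond -/(pin2 k w i j).
case: (P_bounds i j) => hp1 _ _ _; case: uvt => hv _ _ _.
have hp : P i j != 0 by apply: lt0r_neq0; apply: lt_le_trans hp1.
by rewrite divfK // mulrA.
Qed.

Definition T3 i j l := \sum_(B : {set 'I_d} | (i \in B) && (j \in B) && ((i \in B) && (l \in B))) samp_prob k w B.

Lemma samp_ge0 B : 0 <= samp_prob k w B.
Proof.
apply: sumr_ge0 => i _; apply: mulr_ge0; first exact: q_ge0.
by apply: sumr_ge0 => A _; case: ifP => // _; rewrite invr_ge0.
Qed.

Lemma G_le i j l :
  \sum_(B : {set 'I_d}) samp_prob k w B * ((hmat k w x B i j * w j) * (hmat k w x B i l * w l))
  <= `|w j| * `|w l| * (T3 i j l / (P i j * P i l)).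
Proof.
have -> : \sum_(B : {set 'I_d}) samp_prob k w B * ((hmat k w x B i j * w j) * (hmat k w x B i l * w l))
   = (x i * x j / P i j * w j) * (x i * x l / P i l * w l) * T3 i j l.
  rewrite /T3 -sumP_cond; apply: eq_bigr => B _.
  rewrite !hmatE; case: (_ && _); case: (_ && _) => /=; by rewrite ?mul0r ?mulr0.
have hP a b : 0 < P a b by case: (P_bounds a b) => h _ _ _; case: uvt => hv _ _ _; apply: lt_le_trans h.
have hT : 0 <= T3 i j l by apply: sumr_ge0 => B _; exact: samp_ge0.
have hR : 0 <= T3 i j l / (P i j * P i l) by rewrite divr_ge0 // mulr_ge0 // ltW.
have -> : (x i * x j / P i j * w j) * (x i * x l / P i l * w l) * T3 i j l =
   (x i * x j * (x i * x l)) * (w j * w l * (T3 i j l / (P i j * P i l))).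
  by field; rewrite !lt0r_neq0.
apply: le_trans (ler_norm _) _.
rewrite normrM -[X in _ <= X]mul1r; apply: ler_pM => //.
  rewrite !normrM.
  have := hx i; have := hx j; have := hx l.
  have := normr_ge0 (x i); have := normr_ge0 (x j); have := normr_ge0 (x l).
  move=> *; rewrite mulr_ile1 ?mulr_ge0 ?mulr_ile1 //.
by rewrite [`|_ * (T3 _ _ _ / _)|]normrM (ger0_norm hR) normrM.
Qed.

Lemma q3_le1 i j l : i != j -> i != l -> j != l -> q i + q j + q l <= 1.
Proof.
move=> hij hil hjl.
have hi : i \notin j |: [set l] by rewrite !inE negb_or hij hil.
have hj : j \notin [set l] by rewrite !inE hjl.
have := qS_le1 (i |: (j |: [set l])).
by rewrite (big_setU1 _ hi) /= (big_setU1 _ hj) /= big_set1 !addrA.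
Qed.

Lemma T3_jj i j : T3 i j j = P i j.
Proof. by apply: eq_bigl => B; rewrite andbb. Qed.

Lemma T3_ij i l : T3 i i l = P i l.
Proof. by apply: eq_bigl => B; case: (i \in B); case: (l \in B). Qed.

Lemma T3_li i j : T3 i j i = P i j.
Proof. by apply: eq_bigl => B; case: (i \in B); case: (j \in B). Qed.

Lemma T3_d i j l : T3 i j l = PS [set i; j; l].
Proof.
apply: eq_bigl => B; rewrite !subUset !sub1set.
by case: (i \in B); case: (j \in B); case: (l \in B).
Qed.

Lemma distinct_ineq i j l : i != j -> i != l -> j != l ->
  u * T3 i j l <= P i j * P i l.
Proof.
move=> hij hil hjl.
rewrite T3_d PS3 // !Pij //.
have := q3_le1 hij hil hjl.
have := q_ge0 i; have := q_ge0 j; have := q_ge0 l.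
case: uvt.
set t := F 3 / F 0.
set a := q i; set b := q j; set c := q l; set U := u; set V := v.
move=> hv hvu hu1 hut hc hb ha hQ.
have h1 : 0 <= (1 - (a + b + c)) * (V ^+ 2 - U * t) by apply: mulr_ge0; lra.
have h2 : 0 <= a * V * (U - V) by apply: mulr_ge0; [apply: mulr_ge0 => //; lra | lra].
have h3 : 0 <= (a + b) * (a + c) * (U - V) ^+ 2 by apply: mulr_ge0; [apply: mulr_ge0; lra | apply: sqr_ge0].
nra.
Qed.

Lemma absw j : `|w j| = q j * norm1 w.
Proof. by rewrite /qprob divfK // lt0r_neq0 // norm1_gt0. Qed.

Lemma Pii_inv i : (P i i)^-1 <= u^-1.
Proof.
case: (P_bounds i i) => _ _ _ h; case: uvt => hv hvu _ _.
have hu : 0 < u by apply: lt_le_trans hvu.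
by rewrite lef_pV2 ?posrE //; apply: lt_le_trans h.
Qed.

Lemma pair_bound i j l :
  `|w j| * `|w l| * (T3 i j l / (P i j * P i l)) <=
  u^-1 * (`|w j| * `|w l|) + (j == l)%:R * (u^-1 * (`|w j| * norm1 w)).
Proof.
have hP a b : 0 < P a b by case: (P_bounds a b) => h _ _ _; case: uvt => hv _ _ _; apply: lt_le_trans h.
case: uvt => hv hvu _ _.
have hu : 0 < u by apply: lt_le_trans hvu.
have hn := norm1_gt0.
have hwj := normr_ge0 (w j); have hwl := normr_ge0 (w l).
have hui : 0 < u^-1 by rewrite invr_gt0.
case: (eqVneq j l) => [<-|hjl].
  rewrite mul1r T3_jj.
  have -> : P i j / (P i j * P i j) = (P i j)^-1 by field; rewrite lt0r_neq0.
  case: (P_bounds i j) => _ _ hq _.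
  have key : `|w j| * (P i j)^-1 <= norm1 w * u^-1.
    rewrite absw -ler_pdivlMr ?invr_gt0 // invrK.
    have -> : norm1 w / u * P i j = P i j / u * norm1 w by ring.
    by rewrite ler_pM2r.
  nra.
rewrite mul0r addr0 mulrC; apply: ler_wpM2r; first exact: mulr_ge0.
case: (eqVneq j i) => [->|hji].
  rewrite T3_ij.
  have -> : P i l / (P i i * P i l) = (P i i)^-1 by field; rewrite !lt0r_neq0.
  exact: Pii_inv.
case: (eqVneq l i) => [->|hli].
  rewrite T3_li.
  have -> : P i j / (P i j * P i i) = (P i i)^-1 by field; rewrite !lt0r_neq0.
  exact: Pii_inv.
rewrite ler_pdivrMr ?mulr_ge0 ?mulr_gt0 //.
rewrite -(ler_pM2l hu) mulrA divff ?mul1r ?lt0r_neq0 //.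
by apply: distinct_ineq => //; rewrite eq_sym.
Qed.

Lemma sq_expand (c : R) (a : 'I_d -> R) :
  c * (\sum_(j < d) a j) ^+ 2 = \sum_(j < d) \sum_(l < d) c * (a j * a l).
Proof.
rewrite expr2 big_distrl /= mulr_sumr; apply: eq_bigr => j _.
by rewrite big_distrr /= mulr_sumr.
Qed.

Lemma EY2 i :
  \sum_(B : {set 'I_d}) samp_prob k w B * (\sum_(j < d) hmat k w x B i j * w j) ^+ 2
  <= 2 * u^-1 * norm1 w ^+ 2.
Proof.
have -> : \sum_(B : {set 'I_d}) samp_prob k w B * (\sum_(j < d) hmat k w x B i j * w j) ^+ 2 =
  \sum_(j < d) \sum_(l < d) \sum_(B : {set 'I_d}) samp_prob k w B *
     ((hmat k w x B i j * w j) * (hmat k w x B i l * w l)).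
  under eq_bigr do rewrite sq_expand.
  rewrite exchange_big /=; apply: eq_bigr => j _.
  by rewrite exchange_big.
apply: le_trans (_ : \sum_(j < d) \sum_(l < d)
   (u^-1 * (`|w j| * `|w l|) + (j == l)%:R * (u^-1 * (`|w j| * norm1 w))) <= _).
  apply: ler_sum => j _; apply: ler_sum => l _.
  exact: le_trans (G_le i j l) (pair_bound i j l).
have -> : \sum_(j < d) \sum_(l < d)
   (u^-1 * (`|w j| * `|w l|) + (j == l)%:R * (u^-1 * (`|w j| * norm1 w))) =
   \sum_(j < d) (u^-1 * `|w j| * norm1 w + u^-1 * (`|w j| * norm1 w)).
  apply: eq_bigr => j _; rewrite big_split /=; congr (_ + _).
    by rewrite /norm1 !mulr_sumr; apply: eq_bigr => l _; rewrite mulrA.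
  rewrite (bigD1 j) //= eqxx mul1r big1 ?addr0 // => l hl.
  by rewrite eq_sym (negbTE hl) mul0r.
rewrite big_split /= -mulr_suml -mulr_sumr -mulr_sumr -mulr_suml -/(norm1 w).
rewrite le_eqVlt; apply/orP; left; apply/eqP; set c := (_ / _)^-1; rewrite /c; move: (F 1 / F 0) => U; ring.
Qed.

Lemma bound2 i : Expect k w (fun B => zvec k w x B i ^+ 2) <= 2 * u^-1 * norm1 w ^+ 2.
Proof.
rewrite /Expect /zvec.
set c := x i * _.
have -> : \sum_(B : {set 'I_d}) samp_prob k w B * (\sum_(j < d) hmat k w x B i j * w j - c) ^+ 2
  = \sum_(B : {set 'I_d}) samp_prob k w B * (\sum_(j < d) hmat k w x B i j * w j) ^+ 2
    - 2 * c * \sum_(B : {set 'I_d}) samp_prob k w B * (\sum_(j < d) hmat k w x B i j * w j)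
    + c ^+ 2 * \sum_(B : {set 'I_d}) samp_prob k w B.
  rewrite [2 * c * _]mulr_sumr [c ^+ 2 * _]mulr_sumr -sumrB -big_split /=.
  by apply: eq_bigr => B _; ring.
rewrite EY Esum1 -/c.
have := EY2 i; have := sqr_ge0 c; lra.
Qed.

End S.

Theorem corollary1 (R : realFieldType) (d k : nat)
  (hk3 : (3 <= k)%N) (hkd : (k <= d - 3)%N)
  (w x : 'I_d -> R) (hw : exists i, w i != 0)
  (hx : forall i, `|x i| <= 1) :
  (forall B : {set 'I_d}, 0 < samp_prob k w B -> forall i : 'I_d,
      `|zvec k w x B i| <=
        ((d - 1) * (d - 2))%:R / ((k - 1) * (k - 2))%:R * norm1 w)
  /\
  (forall i : 'I_d,
      Expect k w (fun B => zvec k w x B i ^+ 2) <=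
        2 * (d - 1)%:R / (k - 1)%:R * norm1 w ^+ 2).
Proof.
split.
  move=> B _ i; rewrite (Dval R hk3 hkd); exact: bound1.
move=> i; have := bound2 hw hk3 hkd hx i; by rewrite -(K0val R hk3 hkd) [2 * (_ / _)]mulrA.
Qed.
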